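(* Let $p\ge 1$, $s>0$ and $\lambda>0$. Let $\tilde{W}\in\mathbb{R}^{p\times p}$. Let $\hat{W}$ be a projection of $\tilde{W}$ onto the $\log\det$ level set $\mathcal{D}_s:=\{W\in\mathbb{W}^s: h_s(W)=0\}$, i.e. $\hat W\in\arg\min_{W\in\mathcal{D}_s}\tfrac12\|\tilde W-W\|_F^2$, and let $W^\star$ be the (Euclidean/Frobenius) projection of $\hat{W}$ onto the $\ell_1$ ball $\mathcal{B}_\lambda:=\{W\in\mathbb{R}^{p\times p}:\|W\|_{\ell_1}\le\lambda\}$. Then $W^\star$ lies in the intersection $\mathcal{D}_s\cap\mathcal{B}_\lambda$, i.e. $W^\star\in\mathbb{W}^s$, $h_s(W^\star)=0$ and $\|W^\star\|_{\ell_1}\le\lambda$.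
   Context: For $W\in\mathbb{R}^{p\times p}$, $W\circ W$ denotes the entrywise (Hadamard) square, $\rho(\cdot)$ the spectral radius, and $\|W\|_{\ell_1}:=\sum_{j,k}|\mathsf{w}_{jk}|$. Define $\mathbb{W}^s:=\{W\in\mathbb{R}^{p\times p}:\rho(W\circ W)<s\}$ and, for $W\in\mathbb{W}^s$, $h_s(W):=-\log\det(sI-W\circ W)+p\log(s)$. (It is known that for $W\in\mathbb{W}^s$, $h_s(W)=0$ iff the directed graph with weighted adjacency matrix $W$ — an edge $j\to k$ iff $\mathsf{w}_{jk}\neq0$ — is acyclic.) *)

(* Defs.v *)
From mathcomp Require Import all_boot all_order all_algebra.
From mathcomp Require Import complex.
From mathcomp Require Import reals exp.
Set Implicit Arguments. Unset Strict Implicit. Unset Printing Implicit Defensive.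
Import Order.TTheory GRing.Theory Num.Theory.
Local Open Scope ring_scope.

Section Defs.
Variable R : realType.
Variable p : nat.

Definition hsq (W : 'M[R]_p) : 'M[R]_p := \matrix_(j, k) (W j k ^+ 2).

Definition spec_rad_lt (A : 'M[R]_p) (s : R) : Prop :=
  forall z : R[i], eigenvalue (map_mx (fun x : R => (x%:C)%C) A) z -> `|z| < (s%:C)%C.

Definition Wset (s : R) (W : 'M[R]_p) : Prop := spec_rad_lt (hsq W) s.

Definition h_s (s : R) (W : 'M[R]_p) : R :=
  - ln (\det (s%:M - hsq W)) + p%:R * ln s.

Definition Dset (s : R) (W : 'M[R]_p) : Prop := Wset s W /\ h_s s W = 0.

Definition l1norm (W : 'M[R]_p) : R := \sum_j \sum_k `|W j k|.

Definition Bball (lam : R) (W : 'M[R]_p) : Prop := l1norm W <= lam.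

Definition frob2 (A B : 'M[R]_p) : R := \sum_j \sum_k (A j k - B j k) ^+ 2.

Definition is_proj (C : 'M[R]_p -> Prop) (Y X : 'M[R]_p) : Prop :=
  C X /\ forall W, C W -> frob2 Y X / 2 <= frob2 Y W / 2.
End Defs.

(* Main.v *)
Require Import Defs.
From mathcomp Require Import all_boot all_order all_algebra.
From mathcomp Require Import complex.
From mathcomp Require Import reals exp.
From mathcomp Require Import polyrcf lra.
Import Order.TTheory GRing.Theory Num.Theory.
Local Open Scope ring_scope.
Set Implicit Arguments. Unset Strict Implicit. Unset Printing Implicit Defensive.

(* Proof outline:
   - the l1-ball projection shrinks entries: |Wstar_jk| <= |What_jk|;
   - for A = What o What >= 0 with rho(A) < s and det(sI - A) = s^p, an
     M-matrix induction (Schur complements) shows det(rI - A) = r^p for all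
     r >= s, hence char_poly A = X^p and A^p = 0 (Cayley-Hamilton);
   - 0 <= Wstar o Wstar <= A entrywise, so B^p = 0 for B = Wstar o Wstar, whence all eigenvalues
     vanish and det(sI - B) = s^p. *)

Section P.
Variable R : rcfType.

Lemma pos_beyond (q : {poly R}) y : q \is monic ->
  (forall z, y < z -> ~~ root q z) -> forall z, y < z -> 0 < q.[z].
Proof.
move=> mq nr z yz.
have H : {in `[z, +oo[, forall x, ~~ root q x}.
  by move=> w; rewrite in_itv /= andbT => zw; apply: nr; apply: lt_le_trans zw.
have := @sgp_pinftyP R z q H z.
rewrite /sgp_pinfty (monicP mq) sgr1 in_itv /= lexx => /(_ isT) /eqP.
by rewrite sgr_cp0.
Qed.
End P.


Section P.
Variable R : rcfType.

Lemma monic_last_root (q : {poly R}) r1 : q \is monic -> q.[r1] <= 0 ->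
  exists y, [/\ r1 <= y, root q y & forall z, y < z -> 0 < q.[z]].
Proof.
move=> mq qr1.
have q0 : q != 0 by apply: monic_neq0.
set C := cauchy_bound q.
set B := Num.max r1 C + 1.
have r1B : r1 < B by rewrite /B ltr_pwDr // le_max lexx.
have CB : C <= B by rewrite /B ler_wpDr // le_max lexx orbT.
have nrC : forall z, C <= z -> ~~ root q z.
  by move=> z Cz; apply: ge_cauchy_bound => //; rewrite in_itv /= Cz.
have qB : 0 < q.[B].
  apply: (@pos_beyond R q C mq); last first.
    by rewrite /B; apply: le_lt_trans (ltr_pwDr ltr01 (lexx _)); rewrite le_max lexx orbT.
  by move=> z Cz; apply: nrC; apply: ltW.
have [x xin rx] := polyrcf.poly_ivt (ltW r1B) (mulr_le0_ge0 qr1 (ltW qB)).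
have xB : x < B.
  rewrite lt_neqAle (itvP xin) andbT; apply/eqP => xE.
  by move: rx; rewrite xE rootE gt_eqF.
case: (prev_rootP q (r1 - 1) B) => [/eqP|y _ qy yin nry|c _ _ nr].
- by rewrite (negPf q0).
- have xy : x <= y.
    rewrite leNgt; apply/negP => yx.
    by move: (nry x); rewrite in_itv /= yx xB /= rx => /(_ isT).
  exists y; split.
  + by apply: le_trans xy; rewrite (itvP xin).
  + by apply/rootP.
  + move=> z yz; apply: (@pos_beyond R q y mq) => // w yw.
    case: (ltP w B) => wB.
    * by apply: nry; rewrite in_itv /= yw wB.
    * by apply: nrC; apply: le_trans wB.
- exfalso; move: (nr x); rewrite rx in_itv /= xB andbT.
  have h2 : r1 <= x by rewrite (itvP xin).
  have -> : r1 - 1 < x by lra.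
  by move=> /(_ isT).
Qed.

Lemma poly_le0_right (g : {poly R}) y : (forall z, y < z -> g.[z] <= 0) -> g.[y] <= 0.
Proof.
move=> H; rewrite leNgt; apply/negP => gy.
have [d d0 Hd] := poly_cont y g gy.
have : `|g.[y + d / 2] - g.[y]| < g.[y].
  by apply: Hd; rewrite addrAC subrr add0r ger0_norm ?divr_ge0 ?ltW // ltr_pdivrMr // ltr_pMr // ltr1n.
have : g.[y + d/2] <= 0 by apply: H; rewrite ltrDl divr_gt0.
move=> h1 h2; move: h2; rewrite ltr_norml => /andP [h3 _]; lra.
Qed.
End P.


Section M.
Variable R : rcfType.

Definition nnegmx m n (M : 'M[R]_(m,n)) := forall i j, 0 <= M i j.

Lemma nnegmx_mul m n k (A : 'M[R]_(m,n)) (B : 'M[R]_(n,k)) :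
  nnegmx A -> nnegmx B -> nnegmx (A *m B).
Proof.
move=> hA hB i j; rewrite mxE; apply: sumr_ge0 => l _; exact: mulr_ge0.
Qed.

Lemma nnegmx_add m n (A B : 'M[R]_(m,n)) : nnegmx A -> nnegmx B -> nnegmx (A + B).
Proof. by move=> hA hB i j; rewrite mxE addr_ge0. Qed.

Lemma nnegmx_scale m n a (A : 'M[R]_(m,n)) : 0 <= a -> nnegmx A -> nnegmx (a *: A).
Proof. by move=> ha hA i j; rewrite mxE mulr_ge0. Qed.

Lemma char_polyE n (A : 'M[R]_n) r : (char_poly A).[r] = \det (r%:M - A).
Proof.
rewrite /char_poly -horner_evalE -det_map_mx; congr (\det _).
apply/matrixP => i j; rewrite !mxE /= horner_evalE.
by rewrite !hornerE; case: (i == j); rewrite /= ?hornerE.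
Qed.

Lemma det_schur m (x : 'M[R]_1) (u : 'M_(1,m)) (v : 'M_(m,1)) (Y : 'M_m) :
  Y \in unitmx ->
  \det (block_mx x u v Y : 'M_(1 + m)) = \det Y * (x - u *m invmx Y *m v) 0 0.
Proof.
move=> uY.
have -> : block_mx x u v Y = block_mx 1%:M (u *m invmx Y) 0 1%:M *m
                             block_mx (x - u *m invmx Y *m v) 0 v Y.
  rewrite mulmx_block !mul1mx !mul0mx !add0r ?addr0 subrK -mulmxA mulVmx //.
  by rewrite mulmx1.
rewrite det_mulmx det_ublock det_lblock !det1 mul1r det_mx11 mulrC.
by rewrite mulr1 mulrC.
Qed.
End M.


Section C.
Variable R : rcfType.

Definition posdet n (A : 'M[R]_n) t := forall r, t <= r -> 0 < \det (r%:M - A).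
Definition invpos n (A : 'M[R]_n) r :=
  forall v : 'cV_n, nnegmx ((r%:M - A) *m v) -> nnegmx v.

Lemma block_sub n (a : 'M[R]_1) b c (D : 'M_n) r :
  (r%:M - block_mx a b c D : 'M_(1 + n)) = block_mx (r%:M - a) (- b) (- c) (r%:M - D).
Proof. by rewrite (scalar_mx_block 1 n r) opp_block_mx add_block_mx !add0r. Qed.

Lemma unit_of_pos n (Y : 'M[R]_n) : 0 < \det Y -> Y \in unitmx.
Proof. by move=> h; rewrite unitmxE unitfE gt_eqF. Qed.

Lemma schur_eq n (a : 'M[R]_1) b c (D : 'M_n) r : 0 < \det (r%:M - D) ->
  \det (r%:M - block_mx a b c D : 'M_(1 + n)) =
  \det (r%:M - D) * (r - a 0 0 - (b *m (invmx (r%:M - D) *m c)) 0 0).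
Proof.
move=> hD; rewrite block_sub det_schur ?unit_of_pos //.
rewrite mulNmx mulmxN opprK mulmxA !mxE eqxx mulr1n.
rewrite (eq_bigr (fun j => - ((b *m invmx (r%:M - D)) 0 j * c j 0))).
  by rewrite sumrN.
by move=> j _; rewrite mxE mulNr.
Qed.

Lemma inv_nneg n (D : 'M[R]_n) r (c : 'cV_n) : 0 < \det (r%:M - D) ->
  invpos D r -> nnegmx c -> nnegmx (invmx (r%:M - D) *m c).
Proof.
move=> hD hi hc; apply: hi; rewrite mulmxA mulmxV ?unit_of_pos // mul1mx //.
Qed.

Lemma Lsub n (a : 'M[R]_1) b c (D : 'M_n) :
  nnegmx a -> nnegmx b -> nnegmx c -> nnegmx D ->
  (forall r, 0 < r -> posdet D r -> invpos D r) ->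
  forall t, 0 < t -> posdet (block_mx a b c D : 'M_(1 + n)) t -> posdet D t.
Proof.
move=> ha hb hc hD IH t t0 hA r1 tr1.
rewrite ltNge; apply/negP => hr1.
have mq := char_poly_monic D.
have hq : (char_poly D).[r1] <= 0 by rewrite char_polyE.
have [y [r1y ry hy]] := monic_last_root mq hq.
set g := char_poly (block_mx a b c D : 'M_(1 + n)) - ('X - (a 0 0)%:P) * char_poly D.
have gle : forall z, y < z -> g.[z] <= 0.
  move=> z yz.
  have dz : 0 < \det (z%:M - D) by rewrite -char_polyE; apply: hy.
  have pz : posdet D z.
    by move=> r zr; rewrite -char_polyE; apply: hy; apply: lt_le_trans zr.
  have z0 : 0 < z by apply: lt_le_trans t0 _; apply: le_trans tr1 _; apply: le_trans r1y _; apply: ltW.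
  have w0 := inv_nneg dz (IH z z0 pz) hc.
  rewrite /g hornerD hornerN hornerM !char_polyE schur_eq // !hornerE.
  have := nnegmx_mul hb w0 0 0.
  set e := (b *m _) 0 0 => he.
  set d := \det _ in dz *.
  nra.
have := poly_le0_right gle.
rewrite /g hornerD hornerN hornerM (rootP ry) mulr0 subr0 char_polyE.
apply/negP; rewrite -ltNge; apply: hA.
by apply: le_trans tr1 r1y.
Qed.

End C.


Section C.
Variable R : rcfType.

Definition coreP n (A : 'M[R]_n) t :=
  invpos A t /\ \det (t%:M - A) <= t ^+ n /\
  (\det (t%:M - A) = t ^+ n -> forall r, t <= r -> \det (r%:M - A) = r ^+ n).

Lemma nnegmx_col m1 m2 n (u : 'M[R]_(m1, n)) (v : 'M_(m2, n)) :
  nnegmx (col_mx u v) -> nnegmx u /\ nnegmx v.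
Proof.
move=> h; split => i j.
  by have := h (lshift m2 i) j; rewrite col_mxEu.
by have := h (rshift m1 i) j; rewrite col_mxEd.
Qed.

Lemma col_nnegmx m1 m2 n (u : 'M[R]_(m1, n)) (v : 'M_(m2, n)) :
  nnegmx u -> nnegmx v -> nnegmx (col_mx u v).
Proof. by move=> hu hv i j; rewrite mxE; case: splitP => k _. Qed.

Lemma mx11_mul m (u : 'M[R]_(m, 1)) (v : 'M_1) i j : (u *m v) i j = u i 0 * v 0 j.
Proof. by rewrite mxE big_ord1. Qed.

Lemma entD m n (A B : 'M[R]_(m, n)) i j : (A + B) i j = A i j + B i j.
Proof. by rewrite mxE. Qed.
Lemma entN m n (A : 'M[R]_(m, n)) i j : (- A) i j = - A i j.
Proof. by rewrite mxE. Qed.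
Lemma entS n (t : R) (i : 'I_n) : (t%:M : 'M_n) i i = t.
Proof. by rewrite mxE eqxx mulr1n. Qed.

Lemma core_step n (a : 'M[R]_1) b c (D : 'M_n) :
  nnegmx a -> nnegmx b -> nnegmx c -> nnegmx D ->
  (forall t, 0 < t -> posdet D t -> coreP D t) ->
  forall t, 0 < t -> posdet (block_mx a b c D : 'M_(1 + n)) t ->
  coreP (block_mx a b c D : 'M_(1 + n)) t.
Proof.
move=> ha hb hc hD IH t t0 hA.
have IHa : forall r, 0 < r -> posdet D r -> invpos D r.
  by move=> r r0 h; case: (IH r r0 h).
have pD := Lsub ha hb hc hD IHa t0 hA.
have pDr : forall r, t <= r -> posdet D r.
  by move=> r tr r' rr'; apply: pD; apply: le_trans rr'.
have dYr : forall r, t <= r -> 0 < \det (r%:M - D).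
  by move=> r tr; apply: pD.
have ipr : forall r, t <= r -> invpos D r.
  by move=> r tr; apply: IHa; [apply: lt_le_trans tr | apply: pDr].
pose w r := invmx (r%:M - D) *m c.
have w0 : forall r, t <= r -> nnegmx (w r).
  by move=> r tr; apply: inv_nneg => //; [apply: dYr | apply: ipr].
have ewr : forall r, t <= r -> (r%:M - D) *m w r = c.
  by move=> r tr; rewrite /w mulmxA mulmxV ?mul1mx // unit_of_pos // dYr.
pose sig r := r - a 0 0 - (b *m w r) 0 0.
have dX : forall r, t <= r -> \det (r%:M - block_mx a b c D : 'M_(1 + n)) = \det (r%:M - D) * sig r.
  by move=> r tr; rewrite schur_eq // dYr.
have tt : t <= t by [].
have sig0 : 0 < sig t.
  have := hA t tt; rewrite dX // => h.
  by rewrite -(pmulr_rgt0 _ (dYr t tt)).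
have bw0 : forall r, t <= r -> 0 <= (b *m w r) 0 0.
  by move=> r tr; apply: nnegmx_mul => //; apply: w0.
split.
  move=> v; rewrite -[v]vsubmxK block_sub mul_block_col.
  set v0 := usubmx v; set v1 := dsubmx v.
  move=> /nnegmx_col [hal hbe].
  set be := _ + _ in hbe.
  set w1 := invmx (t%:M - D) *m be.
  have hw1 : nnegmx w1 by apply: inv_nneg => //; [apply: dYr | apply: ipr].
  have ev1 : v1 = w1 + w t *m v0.
    rewrite /w1 /w -mulmxA -mulmxDr /be mulNmx [_ + c *m v0]addrC addNKr.
    by rewrite mulmxA mulVmx ?mul1mx // unit_of_pos // dYr.
  have he0 : 0 <= v0 0 0.
    have := hal 0 0.
    rewrite mulNmx ev1 mulmxDr [b *m (w t *m v0)]mulmxA opprD addrA !entD !entN !mx11_mul.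
    rewrite !entD entN entS.
    have := nnegmx_mul hb hw1 0 0.
    move: sig0; rewrite /sig.
    set x1 := (b *m w1) 0 0; set x2 := (b *m w t) 0 0; set e := v0 0 0.
    move=> s0 hx1 h.
    have : 0 <= (t - a 0 0 - x2) * e by nra.
    by rewrite pmulr_rge0.
  have hv0 : nnegmx v0 by move=> i j; rewrite !ord1.
  apply: col_nnegmx => //; rewrite ev1; apply: nnegmx_add => //.
  by apply: nnegmx_mul => //; apply: w0.
have ha0 : 0 <= a 0 0 := ha 0 0.
have [IHa' [IHb IHc]] := IH t t0 (pDr t tt).
have sigt : sig t <= t by rewrite /sig; have := bw0 t tt; lra.
have dYt := dYr t tt.
split.
  rewrite dX // exprS mulrC.
  by apply: ler_pM => //; apply: ltW.
rewrite dX // exprS => heq.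
have [eY es] : \det (t%:M - D) = t ^+ n /\ sig t = t.
  set d := \det _ in heq IHb dYt *.
  have tn0 : 0 < t ^+ n by apply: exprn_gt0.
  set tn := t ^+ n in heq tn0 IHb *.
  split; nra.
have a00 : a 0 0 = 0 by move: es; rewrite /sig; have := bw0 t tt; lra.
have bwt : (b *m w t) 0 0 = 0 by move: es; rewrite /sig; have := bw0 t tt; lra.
move=> r tr.
rewrite dX // (IHc eY r tr) exprS mulrC; congr (_ * _).
rewrite /sig a00 subr0.
suff -> : (b *m w r) 0 0 = 0 by rewrite subr0.
apply/eqP; rewrite eq_le bw0 // andbT -bwt.
have hdiff : nnegmx (w t - w r).
  apply: IHa' => i j.
  have -> : (t%:M - D) *m (w t - w r) = (r - t) *: w r.
    rewrite mulmxBr ewr //.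
    have -> : t%:M - D = (r%:M - D) - (r - t)%:M.
      by apply/matrixP => i0 j0; rewrite !mxE; case: (i0 == j0); rewrite /= ?mulr1n ?mulr0n; lra.
    by rewrite mulmxBl ewr // mul_scalar_mx opprB addrC subrK.
  by rewrite mxE mulr_ge0 ?subr_ge0 //; apply: w0.
have := nnegmx_mul hb hdiff 0 0.
by rewrite mulmxBr entD entN subr_ge0.
Qed.
End C.


Section C.
Variable R : rcfType.

Lemma core n (A : 'M[R]_n) : nnegmx A -> forall t, 0 < t -> posdet A t -> coreP A t.
Proof.
elim: n A => [|n IH] A hA t t0 hp.
  split; first by move=> v _ [i hi] j; exfalso; rewrite ltn0 in hi.
  by rewrite !det_mx00 expr0; split => // _ r _; rewrite det_mx00 expr0.
have -> : A = block_mx (ulsubmx (A : 'M_(1 + n))) (ursubmx (A : 'M_(1 + n)))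
                (dlsubmx (A : 'M_(1 + n))) (drsubmx (A : 'M_(1 + n))) by rewrite submxK.
apply: core_step => //; last by rewrite submxK.
- by move=> i j; rewrite !mxE.
- by move=> i j; rewrite !mxE.
- by move=> i j; rewrite !mxE.
- by move=> i j; rewrite !mxE.
- move=> r r0 hr; apply: IH => //; by move=> i j; rewrite !mxE.
Qed.

Lemma poly_eq_right (p : {poly R}) s : (forall r, s <= r -> p.[r] = 0) -> p = 0.
Proof.
move=> H.
apply: (@roots_geq_poly_eq0 _ p [seq s + i%:R | i <- iota 0 (size p)]).
- apply/allP => x /mapP [i _ ->]; apply/rootP; apply: H.
  by rewrite lerDl ler0n.
- rewrite map_inj_uniq ?iota_uniq // => i j /addrI /eqP.
  by rewrite eqr_nat => /eqP.
- by rewrite size_map size_iota.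
Qed.

Lemma core_nil n (A : 'M[R]_n.+1) s : nnegmx A -> 0 < s -> posdet A s ->
  \det (s%:M - A) = s ^+ n.+1 -> A ^+ n.+1 = 0.
Proof.
move=> hA s0 hp hd.
have [_ [_ hc]] := core hA s0 hp.
have hc' := hc hd.
have E : char_poly A = 'X^(n.+1).
  apply/eqP; rewrite -subr_eq0; apply/eqP; apply: (@poly_eq_right _ s) => r sr.
  by rewrite hornerD hornerN char_polyE hc' // hornerXn subrr.
have := Cayley_Hamilton A.
by rewrite E rmorphXn /= horner_mx_X.
Qed.
End C.


Section X.
Variable R : rcfType.
Local Notation C := (R[i]).
Local Notation f := (real_complex R).

Lemma pos_from (q : {poly R}) y : q \is monic ->
  (forall z, y <= z -> ~~ root q z) -> forall z, y <= z -> 0 < q.[z].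
Proof.
move=> mq nr z yz.
have H : {in `[z, +oo[, forall x, ~~ root q x}.
  by move=> w; rewrite in_itv /= andbT => zw; apply: nr; apply: le_trans zw.
have := @sgp_pinftyP R z q H z.
rewrite /sgp_pinfty (monicP mq) sgr1 in_itv /= lexx => /(_ isT) /eqP.
by rewrite sgr_cp0.
Qed.

Lemma posdet_of_spec n (A : 'M[R]_n) s : 0 < s ->
  (forall z : C, eigenvalue (map_mx (fun x : R => (x%:C)%C) A) z -> `|z| < (s%:C)%C) ->
  posdet A s.
Proof.
move=> s0 hs r sr; rewrite -char_polyE.
apply: (pos_from (char_poly_monic A) (y := s)) => // z sz.
apply/negP; rewrite -eigenvalue_root_char => ez.
have : eigenvalue (map_mx f A) (f z) by rewrite eigenvalue_map.
move=> /hs; rewrite ger0_norm ?ler0c; last by apply: le_trans sz; apply: ltW.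
by rewrite ltcR ltNge sz.
Qed.

Lemma map_mxXn n (B : 'M[R]_n.+1) k : map_mx f (B ^+ k) = (map_mx f B) ^+ k.
Proof.
elim: k => [|k IH]; first by rewrite !expr0 map_scalar_mx /= rmorph1.
by rewrite !exprS -!mulmxE map_mxM IH.
Qed.

Lemma eig_nil n (B : 'M[R]_n.+1) (z : C) : B ^+ n.+1 = 0 ->
  eigenvalue (map_mx f B) z -> z = 0.
Proof.
move=> hB /eigenvalueP [v hv v0].
have hk : forall k, v *m (map_mx f B) ^+ k = z ^+ k *: v.
  elim=> [|k IH]; first by rewrite expr0 scale1r -idmxE mulmx1.
  by rewrite exprSr -mulmxE mulmxA IH -scalemxAl hv scalerA exprSr.
have := hk n.+1; rewrite -map_mxXn hB map_mx0 mulmx0 => /esym/eqP.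
rewrite scaler_eq0 (negPf v0) orbF expf_eq0 /= => /eqP //.
Qed.

Lemma char_nil n (B : 'M[R]_n.+1) s : B ^+ n.+1 = 0 -> \det (s%:M - B) = s ^+ n.+1.
Proof.
move=> hB.
have [rs hrs] := closed_field_poly_normal (char_poly (map_mx f B)).
have z0 : forall z, z \in rs -> z = 0.
  move=> z zr; apply: (eig_nil hB); rewrite eigenvalue_root_char hrs.
  rewrite rootZ; last by rewrite (monicP (char_poly_monic _)) oner_neq0.
  by rewrite root_prod_XsubC.
rewrite (monicP (char_poly_monic _)) scale1r in hrs.
have szr : size rs = n.+1.
  have := size_char_poly (map_mx f B); rewrite hrs size_prod_XsubC.
  by move=> [].
apply: (@complexI R); rewrite -char_polyE -horner_map /= map_char_poly hrs.
rewrite rmorphXn /=.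
have -> : (s%:C)%C ^+ n.+1 = (s%:C)%C ^+ size rs by rewrite szr.
elim: rs z0 {hrs szr} => [|z rs IH] z0; first by rewrite big_nil hornerC expr0.
rewrite big_cons hornerM hornerXsubC (z0 z (mem_head _ _)) subr0 IH ?exprS //.
by move=> w wr; apply: z0; rewrite in_cons wr orbT.
Qed.
End X.


Lemma sum_strict (R : realDomainType) (I : finType) (F G : I -> R) i0 :
  (forall i, F i <= G i) -> F i0 < G i0 -> \sum_i F i < \sum_i G i.
Proof.
move=> hle hlt; rewrite (bigD1 i0) //= [X in _ < X](bigD1 i0) //=.
by apply: ltr_leD => //; apply: ler_sum => i _.
Qed.

Lemma proj_shrink (R : realType) p lam (What Wstar : 'M[R]_p) :
  is_proj (Bball lam) What Wstar -> forall j k, `|Wstar j k| <= `|What j k|.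
Proof.
move=> [hB hmin] j0 k0; rewrite leNgt; apply/negP => hlt.
pose W' := \matrix_(j, k) (if `|What j k| < `|Wstar j k| then What j k else Wstar j k).
have hB' : Bball lam W'.
  apply: le_trans hB; apply: ler_sum => j _; apply: ler_sum => k _.
  rewrite mxE; case: ifP => // h; exact: ltW.
have := hmin W' hB'.
rewrite ler_pM2r ?invr_gt0 ?ltr0n //; apply/negP; rewrite -ltNge.
apply: (sum_strict (i0 := j0)) => [j|].
  apply: ler_sum => k _; rewrite mxE; case: ifP => _; rewrite ?subrr ?expr0n ?sqr_ge0 //.
apply: (sum_strict (i0 := k0)) => [k|].
  rewrite mxE; case: ifP => _; rewrite ?subrr ?expr0n ?sqr_ge0 //.
rewrite mxE hlt subrr expr0n /= exprn_even_gt0 //= subr_eq0.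
by apply/eqP => E; move: hlt; rewrite E ltxx.
Qed.

Lemma pow_le (R : rcfType) n (A B : 'M[R]_n.+1) : nnegmx B ->
  (forall i j, B i j <= A i j) -> forall k i j, 0 <= (B ^+ k) i j /\ (B ^+ k) i j <= (A ^+ k) i j.
Proof.
move=> hB hBA; elim=> [|k IH] i j.
  by rewrite !expr0 !mxE; case: (i == j) => /=; rewrite ?ler01.
rewrite !exprS -!mulmxE !mxE; split.
  by apply: sumr_ge0 => l _; apply: mulr_ge0 => //; case: (IH l j).
apply: ler_sum => l _; apply: ler_pM => //; by case: (IH l j).
Qed.

Theorem proposition1 (R : realType) (p : nat) (s lam : R)
  (Wt What Wstar : 'M[R]_p) :
  (1 <= p)%N -> 0 < s -> 0 < lam ->
  is_proj (Dset s) Wt What ->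
  is_proj (Bball lam) What Wstar ->
  Wset s Wstar /\ h_s s Wstar = 0 /\ l1norm Wstar <= lam.
Proof.
case: p Wt What Wstar => [|n] Wt What Wstar //.
move=> _ s0 lam0 [[hWs hh] _] hproj.
have hBl := hproj.1.
have hA : nnegmx (hsq What) by move=> i j; rewrite mxE sqr_ge0.
have hBn : nnegmx (hsq Wstar) by move=> i j; rewrite mxE sqr_ge0.
have pA : posdet (hsq What) s := posdet_of_spec s0 hWs.
have dA : \det (s%:M - hsq What) = s ^+ n.+1.
  have d0 : 0 < \det (s%:M - hsq What) := pA s (lexx s).
  apply: ln_inj; rewrite ?posrE ?exprn_gt0 //.
  rewrite lnXn // -mulr_natl.
  by move: hh; rewrite /h_s; lra.
have nA := core_nil hA s0 pA dA.
have shrink := proj_shrink hproj.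
have hBA : forall i j, hsq Wstar i j <= hsq What i j.
  move=> i j; have h := shrink i j; rewrite !mxE.
  rewrite -(ger0_norm (sqr_ge0 (Wstar i j))) -(ger0_norm (sqr_ge0 (What i j))) !normrX.
  have h0 := normr_ge0 (Wstar i j).
  move: h h0; set x := `|Wstar i j|; set y := `|What i j| => h h0.
  by rewrite ler_pXn2r // ?nnegrE // (le_trans h0 h).
have nB : hsq Wstar ^+ n.+1 = 0.
  apply/matrixP => i j; have [h1 h2] := pow_le hBn hBA n.+1 i j.
  by rewrite mxE; apply/eqP; rewrite eq_le h1 andbT; move: h2; rewrite nA mxE.
split; [|split]; last exact: hBl.
- move=> z ez; rewrite (eig_nil nB ez) normr0.
  by have := ltcR 0 s; rewrite s0.
- rewrite /h_s char_nil // lnXn // -mulr_natl; lra.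
Qed.
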